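(* Let $A,B$ be real numbers with $A>2B>1$. Then the equation $x=A+B\log(1+x\log x)$ has a unique positive root $x^*=x^*(A,B)$, and it satisfies $$A+B\log(1+A\log A)\ <\ x^*\ <\ A+B\log(1+A\log A)\Bigl(1+\frac{2B}{A-2B}\Bigr).$$ *)

(* Defs.v *)
From Stdlib Require Import Reals.

(* Main.v *)
Require Import Defs.
From Stdlib Require Import Reals Lra Psatz.
Open Scope R_scope.

Lemma ln_le1 x : 0 < x -> ln x <= x - 1.
Proof.
  intro h. rewrite <- (ln_exp (x-1)).
  destruct (Req_dec x (exp (x-1))) as [e|n].
  - rewrite <- e; lra.
  - left. apply ln_increasing; auto. pose proof (exp_ineq1_le (x-1)); lra.
Qed.

Lemma ln_ge x : 0 < x -> 1 - / x <= ln x.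
Proof.
  intro h. pose proof (ln_le1 (/x) (Rinv_0_lt_compat _ h)).
  rewrite ln_Rinv in H; auto. lra.
Qed.

Lemma ln_mono x y : 0 < x -> x <= y -> ln x <= ln y.
Proof.
  intros h1 h2. destruct h2 as [h|h]. left; apply ln_increasing; auto. subst; lra.
Qed.

Lemma xlnx_ge x : 0 < x -> x - 1 <= x * ln x.
Proof.
  intro h. pose proof (ln_ge x h).
  assert (x * (1 - / x) = x - 1) by (field; lra). nra.
Qed.

Lemma keyK x y : 1 <= x -> x < y ->
  ln (1 + y * ln y) - ln (1 + x * ln x) < 2 * ((y - x) / x).
Proof.
  intros hx hxy.
  set (a := ln x). set (b := ln y). set (u := y / x).
  assert (ha : 0 <= a) by (unfold a; rewrite <- ln_1; apply ln_mono; lra).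
  assert (hb : 0 <= b) by (unfold b; rewrite <- ln_1; apply ln_mono; lra).
  assert (hu : y = u * x) by (unfold u; field; lra).
  assert (hu1 : 1 < u).
  { apply (Rmult_lt_reg_r x); [lra|]. lra. }
  assert (hba : b = a + ln u).
  { unfold a, b. rewrite hu, ln_mult; lra. }
  pose proof (ln_le1 u ltac:(lra)) as hl.
  pose proof (xlnx_ge x ltac:(lra)) as hxa. fold a in hxa.
  assert (hyx : (y - x) / x = u - 1) by (rewrite hu; field; lra).
  rewrite hyx.
  assert (hc : 1 + y * b < (1 + x * a) * u * u).
  { rewrite hu, hba.
    assert (u * x * (a + ln u) <= u * x * (a + u - 1)).
    { apply Rmult_le_compat_l; nra. }
    assert (0 <= (u - 1) * (u * (x * a - x + 1))).
    { apply Rmult_le_pos; [lra|]. apply Rmult_le_pos; lra. }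
    nra. }
  assert (hp : 0 < 1 + x * a) by nra.
  assert (ln (1 + y * b) < ln ((1 + x * a) * u * u)).
  { apply ln_increasing; auto. nra. }
  rewrite !ln_mult in H; try nra.
Qed.

Lemma noroot_small A B r : A > 2 * B -> 2 * B > 1 -> 0 < r -> r <= 1 ->
  r = A + B * ln (1 + r * ln r) -> False.
Proof.
  intros hAB hB hr hr1 e.
  assert (hl : ln r <= 0) by (rewrite <- ln_1; apply ln_mono; lra).
  set (p := r * ln r) in *.
  assert (hp0 : p <= 0) by (unfold p; nra).
  pose proof (ln_le1 2 ltac:(lra)) as h2.
  pose proof (ln_ge (2 * r) ltac:(lra)) as h2r.
  rewrite ln_mult in h2r by lra.
  assert (r * (1 - / (2 * r)) = r - /2) by (field; lra).
  assert (hp : p >= - / 2) by (unfold p; nra).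
  pose proof (xlnx_ge r hr) as hpr. fold p in hpr.
  pose proof (ln_ge (1 + p) ltac:(lra)) as hc.
  assert (1 - / (1 + p) >= 2 * p).
  { assert (1 - / (1 + p) = p / (1 + p)) by (field; lra).
    rewrite H0. apply Rle_ge. apply (Rmult_le_reg_r (1 + p)); [lra|].
    assert (p / (1 + p) * (1 + p) = p) by (field; lra). nra. }
  nra.
Qed.

Lemma root_big A B r : A > 2 * B -> 2 * B > 1 -> 0 < r ->
  r = A + B * ln (1 + r * ln r) -> 1 < r /\ A < r.
Proof.
  intros hAB hB hr e.
  destruct (Rle_lt_dec r 1) as [h|h].
  - exfalso; eapply noroot_small; eauto.
  - split; auto.
    assert (0 < ln r) by (rewrite <- ln_1; apply ln_increasing; lra).
    assert (0 < ln (1 + r * ln r)) by (rewrite <- ln_1; apply ln_increasing; nra).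
    nra.
Qed.

Lemma lncont x : 0 < x -> continuity_pt ln x.
Proof. intro h. apply derivable_continuous_pt. exists (/ x). apply derivable_pt_lim_ln; auto. Qed.

Lemma ineq_step B x y : 1 <= x -> x < y -> 2 * B < x -> B > 0 ->
  B * (ln (1 + y * ln y) - ln (1 + x * ln x)) < y - x.
Proof.
  intros h1 h2 h3 h4. pose proof (keyK x y h1 h2).
  assert ((y - x) / x * x = y - x) by (field; lra).
  assert (0 < (y - x) / x).
  { unfold Rdiv; apply Rmult_lt_0_compat; [lra| apply Rinv_0_lt_compat; lra]. }
  nra.
Qed.

Theorem lemma3 (A B : R) (hAB : A > 2 * B) (hB : 2 * B > 1) :
  exists xs : R,
    (0 < xs /\ xs = A + B * ln (1 + xs * ln xs)) /\
    (forall y : R, 0 < y -> y = A + B * ln (1 + y * ln y) -> y = xs) /\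
    A + B * ln (1 + A * ln A) < xs /\
    xs < A + B * ln (1 + A * ln A) * (1 + 2 * B / (A - 2 * B)).
Proof.
  set (L := A + B * ln (1 + A * ln A)).
  set (U := A + B * ln (1 + A * ln A) * (1 + 2 * B / (A - 2 * B))).
  set (g := fun x => x - (A + B * ln (1 + x * ln x))).
  assert (hlA : 0 < ln A) by (rewrite <- ln_1; apply ln_increasing; lra).
  assert (hl1 : 0 < ln (1 + A * ln A)) by (rewrite <- ln_1; apply ln_increasing; nra).
  assert (hLA : A < L) by (unfold L; nra).
  assert (hd : 0 < 2 * B / (A - 2 * B)).
  { unfold Rdiv; apply Rmult_lt_0_compat; [lra| apply Rinv_0_lt_compat; lra]. }
  assert (hUL : L < U).
  { assert (0 < B * ln (1 + A * ln A) * (2 * B / (A - 2 * B))).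
    { apply Rmult_lt_0_compat; [apply Rmult_lt_0_compat|]; lra. }
    unfold U, L. lra. }
  assert (hUd : (U - A) * (A - 2 * B) = B * ln (1 + A * ln A) * A) by (unfold U; field; lra).
  assert (gL : g L < 0).
  { unfold g. assert (ln A < ln L) by (apply ln_increasing; lra).
    assert (ln (1 + A * ln A) < ln (1 + L * ln L)) by (apply ln_increasing; nra).
    assert (B * ln (1 + A * ln A) < B * ln (1 + L * ln L)) by (apply Rmult_lt_compat_l; lra).
    assert (hLe : L = A + B * ln (1 + A * ln A)) by reflexivity.
    lra. }
  assert (gU : 0 < g U).
  { unfold g. pose proof (keyK A U ltac:(lra) ltac:(lra)).
    assert (hq : (U - A) / A * A = U - A) by (field; lra).
    set (q := (U - A) / A) in *.
    assert (B * (ln (1 + U * ln U) - ln (1 + A * ln A)) < B * (2 * q)) by (apply Rmult_lt_compat_l; lra).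
    assert (hLe : L = A + B * ln (1 + A * ln A)) by reflexivity.
    assert (L + 2 * B * q = U).
    { assert (hq2 : q = B * ln (1 + A * ln A) / (A - 2 * B)).
      { unfold q, U. field. lra. }
      rewrite hq2, hLe. unfold U. field. lra. }
    lra. }
  assert (hc : forall a, L <= a <= U -> continuity_pt g a).
  { intros a ha. unfold g.
    apply continuity_pt_minus. apply derivable_continuous_pt, derivable_pt_id.
    apply continuity_pt_plus. apply continuity_pt_const; intros ? ?; auto.
    apply continuity_pt_mult. apply continuity_pt_const; intros ? ?; auto.
    apply (continuity_pt_comp (fun x => 1 + x * ln x) ln).
    - apply continuity_pt_plus. apply continuity_pt_const; intros ? ?; auto.
      apply continuity_pt_mult. apply derivable_continuous_pt, derivable_pt_id. apply lncont; lra.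
    - apply lncont. assert (0 < ln a) by (rewrite <- ln_1; apply ln_increasing; lra). nra. }
  destruct (Ranalysis5.IVT_interv g L U hc hUL gL gU) as [z [hz gz]].
  assert (hzL : z <> L) by (intro e; rewrite e in gz; lra).
  assert (hzU : z <> U) by (intro e; rewrite e in gz; lra).
  unfold g in gz.
  assert (ez : z = A + B * ln (1 + z * ln z)) by lra.
  exists z. split; [split; [lra|exact ez]|]. split.
  - intros y hy ey.
    destruct (root_big A B y hAB hB hy ey) as [y1 y2].
    destruct (root_big A B z hAB hB ltac:(lra) ez) as [z1 z2].
    destruct (Rtotal_order y z) as [h|[h|h]]; auto; exfalso.
    + pose proof (ineq_step B y z ltac:(lra) h ltac:(lra) ltac:(lra)). lra.
    + pose proof (ineq_step B z y ltac:(lra) h ltac:(lra) ltac:(lra)). lra.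
  - fold L. fold U. lra.
Qed.
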